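(* The relation on $\mathbb C^d_\Delta$ defined by $z\sim_N w$ if and only if $N\big(\overline{Az}\big)\cap\overline{Aw}\neq\emptyset$ (closures taken in $\mathbb C^d_\Delta$) is an equivalence relation.
   Context: Let $\mathfrak d$ be an $n$-dimensional real vector space, $\mathfrak d^*$ its dual and $\mathfrak d_{\mathbb C}=\mathfrak d\oplus i\mathfrak d$. A quasilattice in $\mathfrak d$ is the $\mathbb Z$-submodule generated by a finite set of vectors spanning $\mathfrak d$. Let $\Delta\subset\mathfrak d^*$ be an $n$-dimensional convex polytope (not necessarily rational or simple) with $d$ facets, written as $\Delta=\bigcap_{j=1}^d\{\mu\in\mathfrak d^*:\langle\mu,X_j\rangle\ge\lambda_j\}$, where $X_1,\dots,X_d\in\mathfrak d$ are chosen inward-pointing normals to the facets and $\lambda_j\in\mathbb R$; let $Q\subset\mathfrak d$ be a quasilattice containing $X_1,\dots,X_d$. For each face $F$ let $I_F\subseteq\{1,\dots,d\}$ be such that $F=\{\mu\in\Delta:\langle\mu,X_j\rangle=\lambda_j\iff j\in I_F\}$. Write $\mathbb C^F\times(\mathbb C^* )^{F^c}=\{z\in\mathbb C^d:z_j\ne0 \text{ for all } j\notin I_F\}$ and $\mathbb C^d_\Delta=\bigcup_F\mathbb C^F\times(\mathbb C^* )^{F^c}$ (union over all faces). Let $\pi:\mathbb R^d\to\mathfrak d$ with $e_j\mapsto X_j$, $\mathfrak n=\ker\pi$. $T^d=\mathbb R^d/\mathbb Z^d$ with projection $\exp$, acting on $\mathbb C^d$ by $\exp(Z)\cdot z=(e^{2\pi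 iZ_j}z_j)_j$ (extended to $\mathbb C^d/\mathbb Z^d$ for complex $Z$). $N=\ker(T^d\to\mathfrak d/Q)$ (induced by $\pi$) and $A=\{\exp(iY):Y\in\mathfrak n\}$, acting by $z_j\mapsto e^{-2\pi Y_j}z_j$. *)

(* Defs.v *)
From Stdlib Require Import Reals List Arith.
Open Scope R_scope.

(* Complex numbers as pairs (real part, imaginary part). *)
Definition Cx : Type := (R * R)%type.

Fixpoint sumR (m : nat) (f : nat -> R) : R :=
  match m with O => 0 | S k => sumR k f + f k end.

(* d = R^n realised as nat -> R (coordinates i < n); pairing d^* x d *)
Definition pairing (n : nat) (mu v : nat -> R) : R := sumR n (fun i => mu i * v i).

Definition inDelta (n d : nat) (X : nat -> nat -> R) (lam : nat -> R) (mu : nat -> R) : Prop :=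
  forall j, (j < d)%nat -> pairing n mu (X j) >= lam j.

(* Delta is a bounded, n-dimensional polytope and each of the d inequalities
   cuts out a facet, distinct for distinct j (irredundant representation). *)
Definition polytope_with_facets (n d : nat) (X : nat -> nat -> R) (lam : nat -> R) : Prop :=
  (exists M, forall mu, inDelta n d X lam mu -> forall i, (i < n)%nat -> Rabs (mu i) <= M) /\
  (exists mu0, forall j, (j < d)%nat -> pairing n mu0 (X j) > lam j) /\
  (forall j, (j < d)%nat -> exists mu, pairing n mu (X j) = lam j /\
       forall k, (k < d)%nat -> k <> j -> pairing n mu (X k) > lam k).

Definition lin_comb (n : nat) (gens : list (nat -> R)) (c : nat -> R) (i : nat) : R :=
  sumR (length gens) (fun k => c k * nth k gens (fun _ => 0) i).

Definition spans (n : nat) (gens : list (nat -> R)) : Prop :=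
  forall v : nat -> R, exists c : nat -> R,
    forall i, (i < n)%nat -> v i = lin_comb n gens c i.

Definition inQ (n : nat) (gens : list (nat -> R)) (v : nat -> R) : Prop :=
  exists c : nat -> Z, forall i, (i < n)%nat -> v i = lin_comb n gens (fun k => IZR (c k)) i.

Definition piX (d : nat) (X : nat -> nat -> R) (Z : nat -> R) : nat -> R :=
  fun i => sumR d (fun j => Z j * X j i).

Definition in_kernel (n d : nat) (X : nat -> nat -> R) (Y : nat -> R) : Prop :=
  forall i, (i < n)%nat -> piX d X Y i = 0.

(* exp(Z) in T^d lies in N = ker(T^d -> d/Q) iff pi(Z) in Q
   (elements of N are represented by such Z in R^d) *)
Definition in_N (n d : nat) (X : nat -> nat -> R) (gens : list (nat -> R)) (Z : nat -> R) : Prop :=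
  inQ n gens (piX d X Z).

(* points of C^d: nat -> Cx, with coordinates j >= d equal to 0 *)
Definition rot (t : R) (z : Cx) : Cx :=
  (cos (2 * PI * t) * fst z - sin (2 * PI * t) * snd z,
   sin (2 * PI * t) * fst z + cos (2 * PI * t) * snd z).

Definition rscale (a : R) (z : Cx) : Cx := (a * fst z, a * snd z).

(* exp(Z) . z = (e^{2 pi i Z_j} z_j)_j *)
Definition actT (d : nat) (Z : nat -> R) (z : nat -> Cx) : nat -> Cx :=
  fun j => if (j <? d)%nat then rot (Z j) (z j) else z j.

(* exp(iY) . z = (e^{-2 pi Y_j} z_j)_j *)
Definition actA (d : nat) (Y : nat -> R) (z : nat -> Cx) : nat -> Cx :=
  fun j => if (j <? d)%nat then rscale (exp (- (2 * PI * Y j))) (z j) else z j.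

(* I_mu = { j | <mu, X_j> = lam_j } ; index sets I_F of faces F of Delta are exactly
   the sets I_mu for mu in Delta *)
Definition face_index (n d : nat) (X : nat -> nat -> R) (lam : nat -> R) (I : nat -> Prop) : Prop :=
  exists mu, inDelta n d X lam mu /\
    forall j, (j < d)%nat -> (I j <-> pairing n mu (X j) = lam j).

(* C^d_Delta = union over faces F of C^F x (C-star)^{F^c} *)
Definition CdDelta (n d : nat) (X : nat -> nat -> R) (lam : nat -> R) (z : nat -> Cx) : Prop :=
  (forall j, (d <= j)%nat -> z j = (0, 0)) /\
  exists I, face_index n d X lam I /\
    forall j, (j < d)%nat -> ~ I j -> z j <> (0, 0).

Definition Aorbit (n d : nat) (X : nat -> nat -> R) (z : nat -> Cx) (p : nat -> Cx) : Prop :=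
  exists Y, in_kernel n d X Y /\ p = actA d Y z.

Definition closureD (n d : nat) (X : nat -> nat -> R) (lam : nat -> R)
    (S : (nat -> Cx) -> Prop) (p : nat -> Cx) : Prop :=
  CdDelta n d X lam p /\
  forall eps, eps > 0 -> exists s, S s /\
    forall j, (j < d)%nat ->
      Rabs (fst (p j) - fst (s j)) < eps /\ Rabs (snd (p j) - snd (s j)) < eps.

Definition Nimage (n d : nat) (X : nat -> nat -> R) (gens : list (nat -> R))
    (S : (nat -> Cx) -> Prop) (p : nat -> Cx) : Prop :=
  exists Z s, in_N n d X gens Z /\ S s /\ p = actT d Z s.

Definition simN (n d : nat) (X : nat -> nat -> R) (lam : nat -> R) (gens : list (nat -> R))
    (z w : nat -> Cx) : Prop :=
  CdDelta n d X lam z /\ CdDelta n d X lam w /\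
  exists p, Nimage n d X gens (closureD n d X lam (Aorbit n d X z)) p /\
            closureD n d X lam (Aorbit n d X w) p.

(* Main.v *)
Require Import Defs.
From Stdlib Require Import Reals List Arith Lra Lia Psatz ZArith Classical FunctionalExtensionality.
Open Scope R_scope.

Lemma sumR_ext m f g : (forall k, (k<m)%nat -> f k = g k) -> sumR m f = sumR m g.
Proof. induction m; intros H; simpl; auto. rewrite IHm by (intros; apply H; lia). rewrite H by lia. auto. Qed.
Lemma sumR_plus m f g : sumR m (fun k => f k + g k) = sumR m f + sumR m g.
Proof. induction m; simpl; [lra|]. rewrite IHm; lra. Qed.
Lemma sumR_scal m c f : sumR m (fun k => c * f k) = c * sumR m f.
Proof. induction m; simpl; [lra|]. rewrite IHm; lra. Qed.
Lemma sumR_zero m : sumR m (fun _ => 0) = 0.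
Proof. induction m; simpl; [lra|]. rewrite IHm; lra. Qed.
Lemma sumR_swap m p F : sumR m (fun j => sumR p (fun i => F i j)) = sumR p (fun i => sumR m (fun j => F i j)).
Proof. induction m; simpl. - rewrite sumR_zero; auto. - rewrite IHm, <- sumR_plus; auto. Qed.
Lemma sumR_le m f g : (forall k, (k<m)%nat -> f k <= g k) -> sumR m f <= sumR m g.
Proof. induction m; intros H; simpl; [lra|]. assert (f m <= g m) by (apply H; lia).
 assert (sumR m f <= sumR m g) by (apply IHm; intros; apply H; lia). lra. Qed.
Lemma sumR_nonneg m f : (forall k, (k<m)%nat -> 0 <= f k) -> 0 <= sumR m f.
Proof. intros H. rewrite <- (sumR_zero m). apply sumR_le; auto. Qed.
Lemma sumR_ge_term m f j : (forall k, (k<m)%nat -> 0<=f k) -> (j<m)%nat -> f j <= sumR m f.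
Proof. induction m; intros H Hj; [lia|]. simpl.
 destruct (Nat.eq_dec j m). - subst. assert (0 <= sumR m f) by (apply sumR_nonneg; intros; apply H; lia). lra.
 - assert (f j <= sumR m f) by (apply IHm; [intros; apply H; lia|lia]). assert (0<= f m) by (apply H; lia). lra. Qed.
Lemma sumR_ind m j0 v : (j0<m)%nat -> sumR m (fun j => if Nat.eqb j j0 then v else 0) = v.
Proof. induction m; intros Hj; [lia|]. simpl. destruct (Nat.eq_dec j0 m).
 - subst. rewrite Nat.eqb_refl. rewrite (sumR_ext m _ (fun _ => 0)). rewrite sumR_zero; lra.
   intros k Hk. destruct (Nat.eqb_spec k m); [lia|auto].
 - rewrite IHm by lia. destruct (Nat.eqb_spec m j0); [lia|lra]. Qed.

Lemma fin_eps m (Q : nat -> R -> Prop) :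
  (forall j e e', Q j e -> 0 < e' -> e' <= e -> Q j e') ->
  (forall j, (j<m)%nat -> exists e, 0<e /\ Q j e) -> exists e, 0<e /\ forall j, (j<m)%nat -> Q j e.
Proof. intros Hmon. induction m; intros H.
 - exists 1; split; [lra| intros; lia].
 - destruct IHm as [e1 [He1 H1]]. intros; apply H; lia.
   destruct (H m) as [e2 [He2 H2]]. lia.
   exists (Rmin e1 e2). split. apply Rmin_pos; auto.
   intros j Hj. destruct (Nat.eq_dec j m).
   + subst. apply Hmon with e2; auto. apply Rmin_pos; auto. apply Rmin_r.
   + apply Hmon with e1; auto. apply H1; lia. apply Rmin_pos; auto. apply Rmin_l. Qed.

Lemma rot_rot a b z : rot a (rot b z) = rot (a+b) z.
Proof. destruct z as [x y]; unfold rot; simpl.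
 replace (2*PI*(a+b)) with (2*PI*a + 2*PI*b) by ring. rewrite cos_plus, sin_plus. f_equal; ring. Qed.
Lemma rot_0 z : rot 0 z = z.
Proof. destruct z as [x y]; unfold rot; simpl. replace (2*PI*0) with 0 by ring. rewrite cos_0, sin_0. f_equal; ring. Qed.
Lemma rot_inv t z : rot (-t) (rot t z) = z.
Proof. rewrite rot_rot. replace (-t+t) with 0 by ring. apply rot_0. Qed.
Lemma rot_zero t : rot t (0,0) = (0,0).
Proof. unfold rot; simpl. f_equal; ring. Qed.
Lemma rot_eq0 t z : rot t z = (0,0) -> z = (0,0).
Proof. intros H. rewrite <- (rot_inv t z), H. apply rot_zero. Qed.
Lemma rot_rscale t a z : rot t (rscale a z) = rscale a (rot t z).
Proof. destruct z; unfold rot, rscale; simpl; f_equal; ring. Qed.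

Lemma actT_actT d Z Z' x : actT d Z' (actT d Z x) = actT d (fun j => Z' j + Z j) x.
Proof. apply functional_extensionality; intros j; unfold actT. destruct (j <? d)%nat; auto. apply rot_rot. Qed.
Lemma actT_inv d Z x : actT d (fun j => - Z j) (actT d Z x) = x.
Proof. apply functional_extensionality; intros j; unfold actT. destruct (j <? d)%nat; auto. apply rot_inv. Qed.

Lemma piX_plus d X Z Z' i : piX d X (fun j => Z j + Z' j) i = piX d X Z i + piX d X Z' i.
Proof. unfold piX. rewrite <- sumR_plus. apply sumR_ext; intros; ring. Qed.
Lemma piX_opp d X Z i : piX d X (fun j => - Z j) i = - piX d X Z i.
Proof. unfold piX. replace (- sumR d (fun j => Z j * X j i)) with ((-1) * sumR d (fun j => Z j * X j i)) by ring.
 rewrite <- sumR_scal. apply sumR_ext; intros; ring. Qed.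
Lemma lin_comb_plus n g c c' i : lin_comb n g (fun k => c k + c' k) i = lin_comb n g c i + lin_comb n g c' i.
Proof. unfold lin_comb. rewrite <- sumR_plus. apply sumR_ext; intros; ring. Qed.
Lemma lin_comb_opp n g c i : lin_comb n g (fun k => - c k) i = - lin_comb n g c i.
Proof. unfold lin_comb. replace (- sumR (length g) (fun k => c k * nth k g (fun _ => 0) i)) with ((-1) * sumR (length g) (fun k => c k * nth k g (fun _ => 0) i)) by ring.
 rewrite <- sumR_scal. apply sumR_ext; intros; ring. Qed.

Lemma in_N_plus n d X g Z Z' : in_N n d X g Z -> in_N n d X g Z' -> in_N n d X g (fun j => Z j + Z' j).
Proof. intros [c Hc] [c' Hc']. exists (fun k => (c k + c' k)%Z). intros i Hi.
 rewrite piX_plus, Hc, Hc' by auto. rewrite <- lin_comb_plus. unfold lin_comb. apply sumR_ext; intros.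
 rewrite plus_IZR; auto. Qed.
Lemma in_N_opp n d X g Z : in_N n d X g Z -> in_N n d X g (fun j => - Z j).
Proof. intros [c Hc]. exists (fun k => (- c k)%Z). intros i Hi.
 rewrite piX_opp, Hc by auto. rewrite <- lin_comb_opp. unfold lin_comb. apply sumR_ext; intros.
 rewrite opp_IZR; auto. Qed.
Lemma in_N_0 n d X g : in_N n d X g (fun _ => 0).
Proof. exists (fun _ => 0%Z). intros i Hi. unfold piX, lin_comb.
 rewrite (sumR_ext _ _ (fun _ => 0)), (sumR_ext (length g) _ (fun _ => 0)), !sumR_zero; auto;
 intros; simpl; ring. Qed.

Lemma stab n d X lam w : CdDelta n d X lam w ->
  exists mu, inDelta n d X lam mu /\ forall j, (j<d)%nat -> w j = (0,0) -> pairing n mu (X j) = lam j.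
Proof. intros [_ [I [[mu [Hmu HI]] HI2]]]. exists mu; split; auto.
 intros j Hj Hw. apply HI; auto. apply NNPP; intros Hn. apply (HI2 j Hj Hn Hw). Qed.
Lemma mkCd n d X lam q mu : (forall j, (d<=j)%nat -> q j = (0,0)) -> inDelta n d X lam mu ->
  (forall j, (j<d)%nat -> q j = (0,0) -> pairing n mu (X j) = lam j) -> CdDelta n d X lam q.
Proof. intros H0 Hmu H. split; auto. exists (fun j => pairing n mu (X j) = lam j). split.
 - exists mu; split; auto. intros; tauto.
 - intros j Hj Hn Hq. apply Hn, H; auto. Qed.

Lemma actA_lt d Y z j : (j<d)%nat -> actA d Y z j = rscale (exp (-(2*PI*Y j))) (z j).
Proof. intros H; unfold actA; rewrite (proj2 (Nat.ltb_lt j d) H); auto. Qed.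
Lemma actT_lt d Z z j : (j<d)%nat -> actT d Z z j = rot (Z j) (z j).
Proof. intros H; unfold actT; rewrite (proj2 (Nat.ltb_lt j d) H); auto. Qed.
Lemma actT_ge d Z z j : (d<=j)%nat -> actT d Z z j = z j.
Proof. intros H; unfold actT. destruct (Nat.ltb_spec j d); [lia|auto]. Qed.

Lemma kernel_0 n d X : in_kernel n d X (fun _ => 0).
Proof. intros i Hi. unfold piX. rewrite (sumR_ext _ _ (fun _ => 0)). apply sumR_zero. intros; ring. Qed.
Lemma kernel_plus n d X Y Y' : in_kernel n d X Y -> in_kernel n d X Y' -> in_kernel n d X (fun j => Y j + Y' j).
Proof. intros H H' i Hi. rewrite piX_plus, H, H'; auto; ring. Qed.

Lemma cl_self n d X lam z : CdDelta n d X lam z -> closureD n d X lam (Aorbit n d X z) z.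
Proof. intros Hz; split; auto. intros eps He. exists (actA d (fun _ => 0) z). split.
 - exists (fun _ => 0); split; auto. apply kernel_0.
 - intros j Hj. rewrite actA_lt by auto. replace (-(2*PI*0)) with 0 by ring. rewrite exp_0.
   unfold rscale; simpl. replace (fst (z j) - 1 * fst (z j)) with 0 by ring.
   replace (snd (z j) - 1 * snd (z j)) with 0 by ring. rewrite Rabs_R0; lra. Qed.

Lemma cl_trans n d X lam x y z : closureD n d X lam (Aorbit n d X y) x ->
  closureD n d X lam (Aorbit n d X z) y -> closureD n d X lam (Aorbit n d X z) x.
Proof. intros [Hx Hxy] [Hy Hyz]. split; auto. intros eps He.
 destruct (Hxy (eps/2)) as [s [[Y1 [HY1 ->]] H1]]. lra.
 set (M := 1 + sumR d (fun j => exp (-(2*PI*Y1 j)))).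
 assert (HM : forall j, (j<d)%nat -> exp (-(2*PI*Y1 j)) <= M - 1).
 { intros j Hj. unfold M. replace (1 + _ - 1) with (sumR d (fun j => exp (-(2*PI*Y1 j)))) by ring.
   apply sumR_ge_term with (f := fun j => exp (-(2*PI*Y1 j))); auto. intros; left; apply exp_pos. }
 assert (HM1 : 1 <= M). { unfold M. assert (0 <= sumR d (fun j => exp (-(2*PI*Y1 j)))) by (apply sumR_nonneg; intros; left; apply exp_pos). lra. }
 destruct (Hyz (eps/(2*M))) as [s [[Y2 [HY2 ->]] H2]]. apply Rdiv_lt_0_compat; lra.
 exists (actA d (fun j => Y1 j + Y2 j) z). split.
 - exists (fun j => Y1 j + Y2 j); split; auto. apply kernel_plus; auto.
 - intros j Hj. specialize (H1 j Hj). specialize (H2 j Hj). specialize (HM j Hj).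
   rewrite actA_lt in * by auto. unfold rscale in *; simpl in *.
   replace (-(2*PI*(Y1 j + Y2 j))) with (-(2*PI*Y1 j) + -(2*PI*Y2 j)) by ring. rewrite exp_plus.
   set (e1 := exp (-(2*PI*Y1 j))) in *. set (e2 := exp (-(2*PI*Y2 j))) in *.
   assert (0 < e1) by apply exp_pos.
   destruct H1 as [H1a H1b]; destruct H2 as [H2a H2b].
   assert (Hk : e1 * (eps/(2*M)) <= eps/2).
   { unfold Rdiv. rewrite Rinv_mult. 
     assert (0 < /M) by (apply Rinv_0_lt_compat; lra).
     assert (e1 * /M <= 1). { apply Rmult_le_reg_r with M; [lra|]. rewrite Rmult_assoc, Rinv_l by lra. lra. }
     assert (0 < /2) by lra. nra. }
   split.
   + replace (fst (x j) - e1 * e2 * fst (z j)) with ((fst (x j) - e1 * fst (y j)) + e1 * (fst (y j) - e2 * fst (z j))) by ring.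
     eapply Rle_lt_trans. apply Rabs_triang. rewrite Rabs_mult, (Rabs_right e1) by lra. nra.
   + replace (snd (x j) - e1 * e2 * snd (z j)) with ((snd (x j) - e1 * snd (y j)) + e1 * (snd (y j) - e2 * snd (z j))) by ring.
     eapply Rle_lt_trans. apply Rabs_triang. rewrite Rabs_mult, (Rabs_right e1) by lra. nra.
Qed.

Lemma cl_rot n d X lam Z x y : closureD n d X lam (Aorbit n d X y) x ->
  closureD n d X lam (Aorbit n d X (actT d Z y)) (actT d Z x).
Proof. intros [Hx Hxy]. split.
 - destruct (stab _ _ _ _ _ Hx) as [mu [Hmu Ht]]. apply mkCd with mu; auto.
   + intros j Hj. rewrite actT_ge by auto. apply Hx; auto.
   + intros j Hj H0. rewrite actT_lt in H0 by auto. apply Ht; auto. eapply rot_eq0; eauto.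
 - intros eps He. destruct (Hxy (eps/2)) as [s [[Y [HY ->]] H1]]. lra.
   exists (actA d Y (actT d Z y)). split. exists Y; split; auto.
   intros j Hj. specialize (H1 j Hj). rewrite actA_lt in * by auto. rewrite !actT_lt by auto.
   rewrite <- rot_rscale. destruct H1 as [Ha Hb].
   set (u := x j) in *. set (v := rscale (exp (-(2*PI*Y j))) (y j)) in *.
   destruct u as [u1 u2]; destruct v as [v1 v2]; unfold rot; simpl in *.
   pose proof (COS_bound (2*PI*Z j)); pose proof (SIN_bound (2*PI*Z j)).
   set (c := cos (2*PI*Z j)) in *; set (sn := sin (2*PI*Z j)) in *.
   assert (Rabs c <= 1) by (apply Rabs_le; lra). assert (Rabs sn <= 1) by (apply Rabs_le; lra).
   split.
   + replace (c*u1 - sn*u2 - (c*v1 - sn*v2)) with (c*(u1-v1) + - (sn*(u2-v2))) by ring.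
     eapply Rle_lt_trans. apply Rabs_triang. rewrite Rabs_Ropp, !Rabs_mult.
     pose proof (Rabs_pos (u1-v1)); pose proof (Rabs_pos (u2-v2)); pose proof (Rabs_pos c); pose proof (Rabs_pos sn). nra.
   + replace (sn*u1 + c*u2 - (sn*v1 + c*v2)) with (sn*(u1-v1) + c*(u2-v2)) by ring.
     eapply Rle_lt_trans. apply Rabs_triang. rewrite !Rabs_mult.
     pose proof (Rabs_pos (u1-v1)); pose proof (Rabs_pos (u2-v2)); pose proof (Rabs_pos c); pose proof (Rabs_pos sn). nra.
Qed.

Lemma zero_small c M : 0 <= M -> (forall eps, eps > 0 -> Rabs c <= eps*M) -> c = 0.
Proof. intros HM H. destruct (Req_dec c 0); auto. exfalso.
 assert (Hc : 0 < Rabs c) by (apply Rabs_pos_lt; auto).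
 specialize (H (Rabs c / (2*(M+1)))). assert (Rabs c / (2*(M+1)) > 0) by (apply Rdiv_lt_0_compat; lra).
 specialize (H H1). unfold Rdiv in H. 
 assert (Rabs c * / (2*(M+1)) * M < Rabs c); [|lra].
 assert (/ (2*(M+1)) * M < 1). { apply Rmult_lt_reg_l with (2*(M+1)); [lra|].
   rewrite <- Rmult_assoc, Rinv_r by lra. lra. }
 nra. Qed.
Lemma nonneg_small c M : 0 <= M -> (forall eps, eps > 0 -> -(eps*M) <= c) -> 0 <= c.
Proof. intros HM H. destruct (Rle_lt_dec 0 c); auto. exfalso.
 specialize (H (-c / (2*(M+1)))). assert (-c / (2*(M+1)) > 0) by (apply Rdiv_lt_0_compat; lra).
 specialize (H H0). unfold Rdiv in H.
 assert (/ (2*(M+1)) * M < 1). { apply Rmult_lt_reg_l with (2*(M+1)); [lra|].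
   rewrite <- Rmult_assoc, Rinv_r by lra. lra. }
 nra. Qed.

Definition rho (p w : nat -> Cx) (j : nat) : R :=
  (fst (p j) * fst (w j) + snd (p j) * snd (w j)) / (fst (w j) * fst (w j) + snd (w j) * snd (w j)).

Lemma rho_pt (x y u v : R) :
  (forall eps, eps > 0 -> exists r, 0 < r /\ Rabs (u - r*x) < eps /\ Rabs (v - r*y) < eps) ->
  0 <= (u*x + v*y)/(x*x+y*y) /\ (u,v) = rscale ((u*x + v*y)/(x*x+y*y)) (x,y).
Proof. intros H.
 assert (Hcr : u*y - v*x = 0).
 { apply zero_small with (Rabs x + Rabs y). pose proof (Rabs_pos x); pose proof (Rabs_pos y); lra.
   intros eps He. destruct (H eps He) as [r [Hr [H1 H2]]].
   replace (u*y - v*x) with ((u - r*x)*y + - ((v-r*y)*x)) by ring.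
   eapply Rle_trans. apply Rabs_triang. rewrite Rabs_Ropp, !Rabs_mult.
   pose proof (Rabs_pos x); pose proof (Rabs_pos y); nra. }
 assert (Hdot : 0 <= u*x + v*y).
 { apply nonneg_small with (Rabs x + Rabs y). pose proof (Rabs_pos x); pose proof (Rabs_pos y); lra.
   intros eps He. destruct (H eps He) as [r [Hr [H1 H2]]].
   replace (u*x + v*y) with ((u - r*x)*x + (v-r*y)*y + r*(x*x+y*y)) by ring.
   assert (Rabs ((u - r*x)*x) <= eps * Rabs x) by (rewrite Rabs_mult; pose proof (Rabs_pos x); nra).
   assert (Rabs ((v - r*y)*y) <= eps * Rabs y) by (rewrite Rabs_mult; pose proof (Rabs_pos y); nra).
   assert (- ((u-r*x)*x) <= eps*Rabs x) by (eapply Rle_trans; [apply Rle_abs| rewrite Rabs_Ropp; auto]).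
   assert (- ((v-r*y)*y) <= eps*Rabs y) by (eapply Rle_trans; [apply Rle_abs| rewrite Rabs_Ropp; auto]).
   assert (0 <= r*(x*x+y*y)) by nra. lra. }
 destruct (Req_dec (x*x+y*y) 0) as [Hn|Hn].
 - assert (x = 0) by nra. assert (y = 0) by nra. subst.
   assert (u = 0). { apply zero_small with 1; [lra|]. intros eps He. destruct (H eps He) as [r [_ [H1 _]]].
     replace (u - r*0) with u in H1 by ring. lra. }
   assert (v = 0). { apply zero_small with 1; [lra|]. intros eps He. destruct (H eps He) as [r [_ [_ H1]]].
     replace (v - r*0) with v in H1 by ring. lra. }
   subst. unfold rscale; simpl. split. replace (0*0+0*0) with 0 by ring. unfold Rdiv; lra.
   f_equal; ring.
 - split. unfold Rdiv; apply Rmult_le_pos; auto; left; apply Rinv_0_lt_compat; nra. unfold rscale; simpl. f_equal.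
   + apply Rmult_eq_reg_r with (x*x+y*y); auto. field_simplify; auto.
     transitivity (u*x^2 + u*y^2 - y*(u*y - v*x)); [rewrite Hcr; ring | ring].
   + apply Rmult_eq_reg_r with (x*x+y*y); auto. field_simplify; auto.
     transitivity (v*y^2 + x*y*u - x*(u*y - v*x)); [ring | rewrite Hcr; ring]. Qed.

Lemma rho_prop n d X lam w p : closureD n d X lam (Aorbit n d X w) p ->
  forall j, (j<d)%nat -> 0 <= rho p w j /\ p j = rscale (rho p w j) (w j).
Proof. intros [_ H] j Hj. unfold rho.
 destruct (p j) as [u v] eqn:Ep. destruct (w j) as [x y] eqn:Ew. simpl. apply rho_pt.
 intros eps He. destruct (H eps He) as [s [[Y [_ ->]] Hs]]. specialize (Hs j Hj).
 rewrite actA_lt, Ep, Ew in Hs by auto. unfold rscale in Hs; simpl in Hs.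
 exists (exp (-(2*PI*Y j))). split; [apply exp_pos|auto]. Qed.

Lemma kernel_identity n d X Y m1 m2 : in_kernel n d X Y ->
  sumR d (fun j => Y j * (pairing n m1 (X j) - pairing n m2 (X j))) = 0.
Proof. intros HY. unfold pairing.
 rewrite (sumR_ext d _ (fun j => sumR n (fun i => (m1 i - m2 i) * (Y j * X j i)))).
 2:{ intros j Hj. replace (sumR n (fun i => m1 i * X j i) - sumR n (fun i => m2 i * X j i))
      with (sumR n (fun i => m1 i * X j i) + (-1) * sumR n (fun i => m2 i * X j i)) by ring.
     rewrite <- sumR_scal, <- sumR_plus, <- sumR_scal. apply sumR_ext; intros; ring. }
 rewrite sumR_swap. rewrite (sumR_ext n _ (fun _ => 0)). apply sumR_zero.
 intros i Hi. rewrite sumR_scal. fold (piX d X Y i). rewrite HY; auto; ring. Qed.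

Lemma nz_m x y : (x,y) <> (0,0) -> 0 < Rabs x + Rabs y.
Proof. intros H. pose proof (Rabs_pos x); pose proof (Rabs_pos y).
 destruct (Req_dec x 0); destruct (Req_dec y 0).
 - subst; exfalso; auto.
 - pose proof (Rabs_pos_lt y H3); lra.
 - pose proof (Rabs_pos_lt x H2); lra.
 - pose proof (Rabs_pos_lt y H3); lra. Qed.

Lemma coordQ (x y rh K : R) : 0 <= rh -> exists e, 0 < e /\ forall b,
  Rabs (rh*x - exp (-b) * x) < e -> Rabs (rh*y - exp (-b) * y) < e ->
  ((rh*x, rh*y) <> (0,0) -> Rabs b <= Rabs (ln (rh/2)) + Rabs (ln (3*rh/2))) /\
  ((x,y) <> (0,0) -> (rh*x, rh*y) = (0,0) -> K <= b).
Proof. intros Hrh. destruct (classic ((x,y) = (0,0))) as [Hz|Hz].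
 - injection Hz as -> ->. exists 1; split; [lra|]. intros b _ _. split; intros H; exfalso; apply H; auto.
   f_equal; ring.
 - pose proof (nz_m _ _ Hz) as Hm. set (m := Rabs x + Rabs y) in *.
   destruct (Req_dec rh 0) as [H0|H0].
   + subst rh. exists (m * exp (-K) / 2). split. pose proof (exp_pos (-K)); apply Rdiv_lt_0_compat; nra.
     intros b H1 H2. split. intros H; exfalso; apply H; f_equal; ring.
     intros _ _. set (r := exp (-b)) in *. assert (0 < r) by apply exp_pos.
     replace (0*x - r*x) with (-(r*x)) in H1 by ring. replace (0*y - r*y) with (-(r*y)) in H2 by ring.
     rewrite Rabs_Ropp, Rabs_mult, (Rabs_right r) in H1, H2 by lra.
     assert (Hrm : r * m < m * exp (-K)) by (replace (r*m) with (r*Rabs x + r*Rabs y) by (unfold m; ring); lra).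
     assert (Hr : r < exp (-K)) by nra. unfold r in Hr. apply exp_lt_inv in Hr. lra.
   + assert (0 < rh) by lra. exists (rh * m / 4). split. apply Rdiv_lt_0_compat; nra.
     intros b H1 H2. split.
     * intros _. set (r := exp (-b)) in *. assert (0 < r) by apply exp_pos.
       replace (rh*x - r*x) with ((rh-r)*x) in H1 by ring. replace (rh*y - r*y) with ((rh-r)*y) in H2 by ring.
       rewrite Rabs_mult in H1, H2.
       assert (Hq : Rabs (rh - r) * m < rh * m / 2) by (replace (Rabs (rh-r)*m) with (Rabs (rh-r)*Rabs x + Rabs (rh-r)*Rabs y) by (unfold m; ring); lra).
       assert (H5 : Rabs (rh - r) < rh / 2) by nra.
       apply Rabs_def2 in H5. destruct H5.
       assert (G7 : ln (rh/2) < ln r) by (apply ln_increasing; lra).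
       assert (G8 : ln r < ln (3*rh/2)) by (apply ln_increasing; lra).
       unfold r in G7, G8. rewrite ln_exp in G7, G8.
       pose proof (Rle_abs (ln (rh/2))); pose proof (Rle_abs (ln (3*rh/2))).
       pose proof (Rle_abs (- ln (rh/2))) as G11; pose proof (Rle_abs (- ln (3*rh/2))) as G12.
       rewrite Rabs_Ropp in G11, G12. apply Rabs_le. lra.
     * intros _ Hp0. injection Hp0 as Ha Hb. exfalso. apply Hz.
       apply Rmult_integral in Ha; apply Rmult_integral in Hb.
       destruct Ha; [lra|]; destruct Hb; [lra|]. subst; auto. Qed.

Lemma Klemma n d X lam w p mu : inDelta n d X lam mu ->
  (forall j, (j<d)%nat -> w j = (0,0) -> pairing n mu (X j) = lam j) ->
  closureD n d X lam (Aorbit n d X w) p ->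
  forall j0, (j0<d)%nat -> p j0 = (0,0) -> pairing n mu (X j0) = lam j0.
Proof. intros Hmu Htw Hp j0 Hj0 Hp0.
 pose proof (rho_prop _ _ _ _ _ _ Hp) as Hrho.
 destruct Hp as [Hpc Hpa]. destruct (stab _ _ _ _ _ Hpc) as [mup [Hmup Htp]].
 apply NNPP; intro Hne.
 set (c0 := pairing n mu (X j0) - lam j0).
 assert (Hc0 : 0 < c0). { pose proof (Hmu j0 Hj0). unfold c0. destruct H; [lra|]. exfalso; apply Hne; auto. }
 assert (Hw0 : w j0 <> (0,0)). { intro H. apply Hne, Htw; auto. }
 set (dl := fun j => pairing n mu (X j) - pairing n mup (X j)).
 set (L := fun j => Rabs (ln (rho p w j / 2)) + Rabs (ln (3 * rho p w j / 2))).
 assert (HL : forall j, 0 <= L j). { intros j; unfold L; pose proof (Rabs_pos (ln (rho p w j / 2))); pose proof (Rabs_pos (ln (3 * rho p w j / 2))); lra. }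
 set (B := sumR d (fun j => L j * Rabs (dl j))).
 assert (HB : 0 <= B). { apply sumR_nonneg. intros; apply Rmult_le_pos; auto; apply Rabs_pos. }
 set (K := (B+1)/c0).
 assert (HK : 0 < K) by (apply Rdiv_lt_0_compat; lra).
 assert (HKc : K * c0 = B + 1) by (unfold K; field; lra).
 set (Q := fun j e => forall b, Rabs (fst (p j) - exp (-b) * fst (w j)) < e ->
     Rabs (snd (p j) - exp (-b) * snd (w j)) < e ->
     (p j <> (0,0) -> Rabs b <= L j) /\ (w j <> (0,0) -> p j = (0,0) -> K <= b)).
 destruct (fin_eps d Q) as [eps [He HQ]].
 - intros j e e' HQe He' Hle b H1 H2. apply HQe; lra.
 - intros j Hj. destruct (Hrho j Hj) as [Hr Hpj].
   destruct (coordQ (fst (w j)) (snd (w j)) (rho p w j) K Hr) as [e [He HH]].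
   exists e; split; auto. intros b H1 H2. rewrite Hpj in H1, H2 |- *. unfold rscale in *; simpl in *.
   destruct (w j) as [x y]; simpl in *. apply HH; auto.
 - destruct (Hpa eps He) as [s [[Y [HY ->]] Hs]].
   assert (Hid : sumR d (fun j => (2*PI*Y j) * dl j) = 0).
   { rewrite (sumR_ext d _ (fun j => (2*PI) * (Y j * dl j))) by (intros; ring).
     rewrite sumR_scal. unfold dl. rewrite kernel_identity; auto; ring. }
   assert (Hterm : forall j, (j<d)%nat ->
     (if Nat.eqb j j0 then K*c0 else 0) - L j * Rabs (dl j) <= (2*PI*Y j) * dl j).
   { intros j Hj. destruct (Hs j Hj) as [H1 H2]. rewrite actA_lt in H1, H2 by auto.
     unfold rscale in H1, H2; simpl in H1, H2.
     destruct (HQ j Hj (2*PI*Y j) H1 H2) as [Q1 Q2].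
     pose proof (Rabs_pos (dl j)). pose proof (HL j).
     destruct (classic (p j = (0,0))) as [Hpz|Hpz].
     - assert (Hd : dl j = pairing n mu (X j) - lam j) by (unfold dl; rewrite Htp; auto).
       assert (Hdp : 0 <= dl j) by (rewrite Hd; pose proof (Hmu j Hj); lra).
       destruct (classic (w j = (0,0))) as [Hwz|Hwz].
       + assert (dl j = 0) by (rewrite Hd, (Htw j Hj Hwz); ring).
         destruct (Nat.eqb_spec j j0). subst; contradiction. rewrite H3, Rabs_R0. lra.
       + specialize (Q2 Hwz Hpz). destruct (Nat.eqb_spec j j0).
         * subst j. assert (dl j0 = c0) by (rewrite Hd; unfold c0; reflexivity). rewrite H3. assert (K*c0 <= 2*PI*Y j0 * c0) by (apply Rmult_le_compat_r; lra). assert (0 <= L j0 * Rabs c0) by (apply Rmult_le_pos; auto; apply Rabs_pos). lra.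
         * nra.
     - specialize (Q1 Hpz). destruct (Nat.eqb_spec j j0). subst; contradiction.
       assert (- (Rabs (2*PI*Y j) * Rabs (dl j)) <= 2*PI*Y j * dl j).
       { rewrite <- Rabs_mult. pose proof (Rle_abs (- (2*PI*Y j * dl j))). rewrite Rabs_Ropp in H3. lra. }
       nra. }
   pose proof (sumR_le d _ _ Hterm) as Hsum. rewrite Hid in Hsum.
   rewrite (sumR_ext d _ (fun j => (if Nat.eqb j j0 then K*c0 else 0) + (-1) * (L j * Rabs (dl j)))) in Hsum by (intros; ring).
   rewrite sumR_plus, sumR_scal, sumR_ind in Hsum by auto. fold B in Hsum. lra.
Qed.

Lemma approx_q n d X lam w x y q (rh : nat -> R) :
  closureD n d X lam (Aorbit n d X w) x ->
  (forall j, (j<d)%nat -> 0 <= rh j /\ y j = rscale (rh j) (w j)) ->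
  CdDelta n d X lam q -> (forall j, (j<d)%nat -> q j = rscale (rh j) (x j)) ->
  closureD n d X lam (Aorbit n d X y) q.
Proof. intros [_ Hx] Hy Hq Hqx. split; auto. intros eps He.
 set (M := 1 + sumR d rh).
 assert (HM : forall j, (j<d)%nat -> rh j <= M - 1).
 { intros j Hj. unfold M. replace (1 + sumR d rh - 1) with (sumR d rh) by ring.
   apply sumR_ge_term; auto. intros k Hk; apply Hy; auto. }
 assert (HM1 : 1 <= M). { unfold M. assert (0 <= sumR d rh) by (apply sumR_nonneg; intros k Hk; apply Hy; auto). lra. }
 destruct (Hx (eps/M)) as [s [[Y [HY ->]] Hs]]. apply Rdiv_lt_0_compat; lra.
 exists (actA d Y y). split. exists Y; split; auto.
 intros j Hj. specialize (Hs j Hj). specialize (HM j Hj). destruct (Hy j Hj) as [Hr Hyj].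
 rewrite actA_lt in * by auto. rewrite Hqx, Hyj by auto. destruct Hs as [H1 H2].
 destruct (x j) as [x1 x2]; destruct (w j) as [w1 w2]; unfold rscale in *; simpl in *.
 set (e := exp (-(2*PI*Y j))) in *.
 assert (Hk : rh j * (eps/M) < eps).
 { unfold Rdiv. apply Rmult_lt_reg_r with M; [lra|].
   rewrite !Rmult_assoc, Rinv_l by lra. nra. }
 split.
 - replace (rh j * x1 - e * (rh j * w1)) with (rh j * (x1 - e*w1)) by ring.
   rewrite Rabs_mult, Rabs_right by lra. pose proof (Rabs_pos (x1 - e*w1)). nra.
 - replace (rh j * x2 - e * (rh j * w2)) with (rh j * (x2 - e*w2)) by ring.
   rewrite Rabs_mult, Rabs_right by lra. pose proof (Rabs_pos (x2 - e*w2)). nra.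
Qed.

Lemma common_q n d X lam w p t : CdDelta n d X lam w ->
  closureD n d X lam (Aorbit n d X w) p -> closureD n d X lam (Aorbit n d X w) t ->
  exists q, closureD n d X lam (Aorbit n d X p) q /\ closureD n d X lam (Aorbit n d X t) q.
Proof. intros Hw Hp Ht.
 pose proof (rho_prop _ _ _ _ _ _ Hp) as Hrp. pose proof (rho_prop _ _ _ _ _ _ Ht) as Hrt.
 set (q := fun j => rscale (rho p w j) (t j)).
 destruct (stab _ _ _ _ _ Hw) as [mu [Hmu Htw]].
 assert (Hq : CdDelta n d X lam q).
 { apply mkCd with mu; auto.
   - intros j Hj. unfold q. destruct Ht as [[Ht0 _] _]. rewrite Ht0 by auto. unfold rscale; simpl; f_equal; ring.
   - intros j Hj Hqj. destruct (classic (p j = (0,0))) as [Hpz|Hpz].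
     + exact (Klemma n d X lam w p mu Hmu Htw Hp j Hj Hpz).
     + apply (Klemma n d X lam w t mu Hmu Htw Ht j Hj). unfold q in Hqj. destruct (Hrp j Hj) as [_ Hpj].
       destruct (Req_dec (rho p w j) 0) as [Hz|Hz].
       * exfalso; apply Hpz. rewrite Hpj, Hz. unfold rscale; f_equal; ring.
       * destruct (t j) as [a b]. unfold rscale in Hqj; simpl in Hqj. injection Hqj as Ha Hb.
         apply Rmult_integral in Ha; apply Rmult_integral in Hb.
         destruct Ha; [contradiction|]; destruct Hb; [contradiction|]. subst; auto. }
 exists q. split.
 - apply approx_q with w t (rho p w); auto.
 - apply approx_q with w p (rho t w); auto.
   intros j Hj. unfold q. destruct (Hrp j Hj) as [_ Hpj]. destruct (Hrt j Hj) as [_ Htj].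
   rewrite Hpj, Htj. destruct (w j); unfold rscale; simpl; f_equal; ring.
Qed.

Theorem mainTheorem4 (n d : nat) (X : nat -> nat -> R) (lam : nat -> R)
    (gens : list (nat -> R))
    (hDelta : polytope_with_facets n d X lam)
    (hQspan : spans n gens)
    (hXQ : forall j, (j < d)%nat -> inQ n gens (X j)) :
  (forall z, CdDelta n d X lam z -> simN n d X lam gens z z) /\
  (forall z w, simN n d X lam gens z w -> simN n d X lam gens w z) /\
  (forall z w u, simN n d X lam gens z w -> simN n d X lam gens w u ->
                 simN n d X lam gens z u).
Proof.
 split; [|split].
 - intros z Hz. split; [auto|split; [auto|]]. exists z. split; [|apply cl_self; auto].
   exists (fun _ => 0), z. split; [apply in_N_0|split; [apply cl_self; auto|]].
   apply functional_extensionality; intros j; unfold actT. destruct (j <? d)%nat; auto. rewrite rot_0; auto.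
 - intros z w [Hz [Hw [p [[Z [s [HZ [Hs ->]]]] Hp]]]].
   split; [auto|split; [auto|]]. exists s. split; auto.
   exists (fun j => - Z j), (actT d Z s). split; [apply in_N_opp; auto|split; auto].
   rewrite actT_inv; auto.
 - intros z w u [Hz [Hw [p [[Z [s [HZ [Hs ->]]]] Hp]]]] [_ [Hu [p2 [[Z' [t [HZ' [Ht ->]]]] Hp2]]]].
   destruct (common_q _ _ _ _ _ _ _ Hw Hp Ht) as [q [Hq1 Hq2]].
   split; [auto|split; [auto|]]. exists (actT d Z' q). split.
   + exists (fun j => Z' j + Z j), (actT d (fun j => - Z j) q). split; [apply in_N_plus; auto|split].
     * eapply cl_trans; [|exact Hs]. pose proof (cl_rot _ _ _ _ (fun j => - Z j) _ _ Hq1) as H.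
       rewrite actT_inv in H. exact H.
     * rewrite actT_actT. f_equal. apply functional_extensionality; intros j; ring.
   + eapply cl_trans; [|exact Hp2]. apply cl_rot; auto.
Qed.
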